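(* Let $p\in(-1,0)\cup(0,1)$, $\omega=e^{i\pi p}$, $f(x)=\frac{(x+\omega)(x-\omega^{-1})}{x^2-1}$, and $a\in\mathbb C$. The recurrent relations $$J_{N,a}(x_1,\ldots,x_{N-1},x)=2\cos\pi a\cdot J_{N-1,a}(x_1,\ldots,x_{N-1})+\sum_{i=1}^{N-1}\frac{x_i\,R_{N,a,i}(x_1,\ldots,x_{N-1})}{x+x_i},$$ where, with $X=(x_1,\ldots,x_{N-1})$ and $\hat X_i$ denoting $X$ with $x_i$ removed, $$R_{N,a,i}(X)=-i\sin\pi p\left(\prod_{j\ne i}f\!\left(\frac{x_i}{x_j}\right)-\prod_{j\ne i}f\!\left(\frac{x_j}{x_i}\right)\right)J_{N-2,a}(\hat X_i)$$ (products over $j\in\{1,\ldots,N-1\}\setminus\{i\}$), together with the initial conditions $$J_{0,a}=1,\qquad J_{1,a}(x)=2\cos\pi a,$$ define uniquely a sequence of homogeneous symmetric functions $J_{N,a}$ of $N$ variables of total degree $0$, $N=0,1,2,\ldots$; and these functions coincide with $$J_{N,a}(x_1,\ldots,x_N)=\sum_{I_+\sqcup I_-=\{1,\ldots,N\}}e^{i\pi a(\#I_--\#I_+)}\prod_{i\in I_-,\,j\in I_+}f\!\left(\frac{x_i}{x_j}\right).$$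
   Context: The sum is over ordered decompositions of $\{1,\ldots,N\}$ into two disjoint subsets $I_+,I_-$. These functions determine the breather form factors of the exponential fields in the sine/sinh-Gordon model. *)

(* Defs.v *)
From HB Require Import structures.
From mathcomp Require Import all_boot all_order all_algebra.
From mathcomp Require Import all_classical all_reals all_analysis.
From mathcomp Require Export complex.
Set Implicit Arguments.
Unset Strict Implicit.
Unset Printing Implicit Defensive.
Import Order.TTheory GRing.Theory Num.Theory.
Local Open Scope ring_scope.
Local Open Scope complex_scope.

Section Defs.
Variable R : realType.
Local Notation C := R[i].

Definition Cexp (z : C) : C :=
  let: a +i* b := z in (expR a * cos b) +i* (expR a * sin b).

Definition Ccos (z : C) : C := (Cexp ('i * z) + Cexp (- ('i * z))) / 2%:R.

Definition omega (p : R) : C := Cexp ('i * (pi * p)%:C).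

Definition ff (p : R) (x : C) : C :=
  (x + omega p) * (x - (omega p)^-1) / (x ^+ 2 - 1).

(* explicit formula: sum over subsets Im = I_- of {1..N}, I_+ = complement *)
Definition Jexpl (p : R) (a : C) (N : nat) (x : 'I_N -> C) : C :=
  \sum_(Im : {set 'I_N})
     Cexp ('i * (pi%:C) * a * ((#|Im|%:Z - #|~: Im|%:Z)%:~R))
     * \prod_(i in Im) \prod_(j in ~: Im) ff p (x i / x j).

Definition dropv (n : nat) (X : 'I_n.+1 -> C) (i : 'I_n.+1) : 'I_n -> C :=
  fun k => X (lift i k).

Definition snocv (n : nat) (X : 'I_n -> C) (x : C) : 'I_n.+1 -> C :=
  fun k => if unlift ord_max k is Some k' then X k' else x.

(* generic points: all coordinates nonzero, x_i^2 <> x_j^2 for i <> j,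
   so that all the expressions f(x_i/x_j), 1/(x + x_i) are defined *)
Definition generic (n : nat) (X : 'I_n -> C) : Prop :=
  (forall i, X i != 0) /\ (forall i j, i != j -> X i ^+ 2 != X j ^+ 2).

(* R_{N,a,i}(X) for N = n.+2, X of n.+1 variables, given J_{N-2} *)
Definition Rterm (p : R) (n : nat) (Jm2 : ('I_n -> C) -> C) (X : 'I_n.+1 -> C)
   (i : 'I_n.+1) : C :=
  - 'i * (sin (pi * p))%:C *
    (\prod_(j | j != i) ff p (X i / X j) - \prod_(j | j != i) ff p (X j / X i))
    * Jm2 (dropv X i).

Definition satisfies_rec (p : R) (a : C) (J : forall N, ('I_N -> C) -> C)
  : Prop :=
  (forall x : 'I_0 -> C, J 0 x = 1) /\
  (forall x : 'I_1 -> C, J 1 x = 2%:R * Ccos (pi%:C * a)) /\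
  (forall (n : nat) (X : 'I_n.+1 -> C) (x : C), generic (snocv X x) ->
     J n.+2 (snocv X x) =
       2%:R * Ccos (pi%:C * a) * J n.+1 X
       + \sum_(i < n.+1) X i * Rterm p (J n) X i / (x + X i)).

End Defs.

(* Main.v *)
Require Import Defs.
From HB Require Import structures.
From mathcomp Require Import all_boot all_order all_algebra.
From mathcomp Require Import all_classical all_reals all_analysis.
From mathcomp Require Import complex fingroup perm.
From mathcomp Require Import ring zify.
Import Order.TTheory GRing.Theory Num.Theory.
Local Open Scope ring_scope.
Local Open Scope complex_scope.

Set Implicit Arguments.
Unset Strict Implicit.
Unset Printing Implicit Defensive.


Lemma prod_neq_lift (V : comPzRingType) n (k : 'I_n.+1) (F : 'I_n.+1 -> V) :
  \prod_(j | j != k) F j = \prod_(i < n) F (lift k i).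
Proof.
rewrite (reindex_omap (lift k) (unlift k)); last first.
  by move=> j; case: unliftP => [i ->|->] //=; rewrite eqxx.
apply: eq_bigl => i; by rewrite eq_sym neq_lift liftK eqxx.
Qed.

Lemma liftF n (k : 'I_n.+1) j : (lift k j == k) = false.
Proof. by apply/negbTE; rewrite eq_sym neq_lift. Qed.
Lemma liftF' n (k : 'I_n.+1) j : (k == lift k j) = false.
Proof. by apply/negbTE; rewrite neq_lift. Qed.

Lemma notin_lift n (k : 'I_n.+1) (T : {set 'I_n}) : k \notin lift k @: T.
Proof. apply/imsetP => -[j _ /eqP]; by rewrite ?liftF ?liftF'. Qed.

Lemma mem_lift n (k : 'I_n.+1) (T : {set 'I_n}) j :
  (lift k j \in lift k @: T) = (j \in T).
Proof. by rewrite mem_imset //; apply: lift_inj. Qed.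

Lemma setC_lift n (k : 'I_n.+1) (T : {set 'I_n}) :
  ~: (lift k @: T) = k |: lift k @: (~: T).
Proof.
apply/setP => i; rewrite !inE; case: (unliftP k i) => [j ->|->].
  by rewrite !mem_lift inE ?liftF ?liftF'.
by rewrite eqxx (negbTE (notin_lift k T)).
Qed.

Lemma setC_lift1 n (k : 'I_n.+1) (T : {set 'I_n}) :
  ~: (k |: lift k @: T) = lift k @: (~: T).
Proof.
apply/setP => i; rewrite !inE; case: (unliftP k i) => [j ->|->].
  by rewrite !mem_lift inE ?liftF ?liftF'.
by rewrite eqxx /= (negbTE (notin_lift _ _)).
Qed.

Lemma card_lift n (k : 'I_n.+1) (T : {set 'I_n}) : #|lift k @: T| = #|T|.
Proof. by rewrite card_imset //; apply: lift_inj. Qed.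

Lemma card_lift1 n (k : 'I_n.+1) (T : {set 'I_n}) : #|k |: lift k @: T| = #|T|.+1.
Proof. by rewrite cardsU1 notin_lift card_lift. Qed.

Lemma sum_split (V : zmodType) n (k : 'I_n.+1) (F : {set 'I_n.+1} -> V) :
  \sum_S F S = \sum_(T : {set 'I_n}) (F (lift k @: T) + F (k |: (lift k @: T))).
Proof.
rewrite big_split /= (bigID (fun S : {set 'I_n.+1} => k \in S)) /= addrC; congr (_ + _).
  rewrite (reindex_onto (fun T : {set 'I_n} => lift k @: T) (fun S : {set 'I_n.+1} => [set j | lift k j \in S])).
    apply: eq_bigl => T; rewrite notin_lift /=; apply/eqP/setP => j.
    by rewrite inE mem_lift.
  move=> S kS; apply/setP => i; case: (unliftP k i) => [j ->|->].
    by rewrite mem_lift inE.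
  by rewrite (negbTE (notin_lift _ _)) (negbTE kS).
rewrite (reindex_onto (fun T : {set 'I_n} => k |: lift k @: T) (fun S : {set 'I_n.+1} => [set j | lift k j \in S])).
  apply: eq_bigl => T; rewrite setU11 /=; apply/eqP/setP => j.
  by rewrite !inE mem_lift ?liftF ?liftF'.
move=> S kS; apply/setP => i; case: (unliftP k i) => [j ->|->].
  by rewrite in_setU1 mem_lift inE liftF.
by rewrite in_setU1 eqxx kS.
Qed.

Lemma prod_lift (V : comPzRingType) n (k : 'I_n.+1) (T : {set 'I_n}) (G : 'I_n.+1 -> V) :
  \prod_(i in lift k @: T) G i = \prod_(i in T) G (lift k i).
Proof. by rewrite big_imset //; move=> x y _ _; apply: lift_inj. Qed.

Lemma prod_lift1 (V : comPzRingType) n (k : 'I_n.+1) (T : {set 'I_n}) (G : 'I_n.+1 -> V) :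
  \prod_(i in k |: lift k @: T) G i = G k * \prod_(i in T) G (lift k i).
Proof. by rewrite big_setU1 ?notin_lift //= prod_lift. Qed.

Lemma prod_setC (V : comPzRingType) n (T : {set 'I_n}) (G : 'I_n -> V) :
  \prod_i G i = \prod_(i in T) G i * \prod_(i in ~: T) G i.
Proof.
rewrite (bigID (fun i => i \in T)) /=; congr (_ * _).
by apply: eq_bigl => i; rewrite inE.
Qed.

Section S.
Variable R : realType.
Local Notation C := R[i].

Lemma Cexp_add (u v : C) : Cexp (u + v) = Cexp u * Cexp v.
Proof.
case: u => a b; case: v => c d.
rewrite /Cexp /= expRD cosD sinD.
apply/eqP; rewrite eq_complex /=; apply/andP; split; apply/eqP; ring.
Qed.

Lemma Cexp0 : Cexp (0 : C) = 1.
Proof. rewrite /Cexp /= expR0 cos0 sin0 mul1r mulr0. by []. Qed.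

Lemma omegaE (p : R) : omega p = (cos (pi * p)) +i* (sin (pi * p)).
Proof.
rewrite /omega /Cexp /=. by rewrite !(mul0r, mul1r, mulr0, subr0, add0r, oppr0, expR0).
Qed.

Lemma omega_inv (p : R) : (omega p)^-1 = (cos (pi * p)) +i* (- sin (pi * p)).
Proof.
apply: mulr1_eq; rewrite omegaE; apply/eqP; rewrite eq_complex /=.
apply/andP; split; apply/eqP.
  by rewrite -(cos2Dsin2 (pi * p)); ring.
ring.
Qed.

Lemma omega_neq0 (p : R) : omega p != 0.
Proof.
apply/eqP => h.
have hr := congr1 (@complex.Re R) h; have hi := congr1 (@complex.Im R) h.
rewrite omegaE /= in hr hi.
have := cos2Dsin2 (pi * p); rewrite hr hi expr0n /= addr0 => /eqP.
by rewrite eq_sym oner_eq0.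
Qed.

Lemma omega_diff (p : R) :
  omega p - (omega p)^-1 = 2%:R * 'i * (sin (pi * p))%:C.
Proof.
rewrite omega_inv omegaE; apply/eqP; rewrite eq_complex /=.
apply/andP; split; apply/eqP; ring.
Qed.

End S.


Section J.
Variables (R : realType) (p : R) (a : R[i]).
Local Notation C := R[i].

Definition cc : C := 'i * pi%:C * a.
Definition EE (d : int) : C := Cexp (cc * d%:~R).
Definition dS n (S : {set 'I_n}) : int := #|S|%:Z - #|~: S|%:Z.
Definition AA n (x : 'I_n -> C) (S : {set 'I_n}) : C :=
  \prod_(i in S) \prod_(j in ~: S) ff p (x i / x j).

Lemma JexplE n (x : 'I_n -> C) : Jexpl p a x = \sum_S EE (dS S) * AA x S.
Proof. by []. Qed.

Lemma EE_S d : EE (d + 1) = EE d * Cexp cc.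
Proof. by rewrite /EE intrD mulrDr mulr1 Cexp_add. Qed.

Lemma EE_P d : EE (d - 1) = EE d * Cexp (- cc).
Proof. by rewrite /EE intrB mulrBr mulr1 Cexp_add. Qed.

Lemma e12 : Cexp cc * Cexp (- cc) = 1.
Proof. by rewrite -Cexp_add subrr Cexp0. Qed.

Lemma dS_lift n (k : 'I_n.+1) (T : {set 'I_n}) : dS (lift k @: T) = dS T - 1.
Proof. rewrite /dS setC_lift card_lift1 card_lift -addn1 PoszD; ring. Qed.

Lemma dS_lift1 n (k : 'I_n.+1) (T : {set 'I_n}) : dS (k |: lift k @: T) = dS T + 1.
Proof. rewrite /dS setC_lift1 card_lift1 card_lift -addn1 PoszD; ring. Qed.

Lemma AA_lift n (x : 'I_n.+1 -> C) (k : 'I_n.+1) (T : {set 'I_n}) :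
  AA x (lift k @: T) = \prod_(i in T) ff p (x (lift k i) / x k) * AA (dropv x k) T.
Proof.
rewrite /AA setC_lift prod_lift.
under eq_bigr => i _ do rewrite prod_lift1.
by rewrite big_split.
Qed.

Lemma AA_lift1 n (x : 'I_n.+1 -> C) (k : 'I_n.+1) (T : {set 'I_n}) :
  AA x (k |: lift k @: T) = \prod_(j in ~: T) ff p (x k / x (lift k j)) * AA (dropv x k) T.
Proof.
rewrite /AA setC_lift1 prod_lift1 (prod_lift _ _ (fun j => ff p (x k / x j))).
congr (_ * _); apply: eq_bigr => i _; exact: prod_lift.
Qed.

Lemma Jexpl_split n (x : 'I_n.+1 -> C) (k : 'I_n.+1) :
  Jexpl p a x = \sum_T (EE (dS T - 1) * \prod_(i in T) ff p (x (lift k i) / x k)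
     + EE (dS T + 1) * \prod_(j in ~: T) ff p (x k / x (lift k j))) * AA (dropv x k) T.
Proof.
rewrite JexplE (sum_split k); apply: eq_bigr => T _.
rewrite AA_lift AA_lift1 dS_lift dS_lift1; ring.
Qed.

End J.


Section Quad.
Variable (F : fieldType).

Lemma quad_monic (b c : F) : ('X + b%:P) * ('X - c%:P) \is monic.
Proof. by rewrite monicMl ?monicXaddC ?monicXsubC. Qed.

Lemma quad_size (b c : F) : size (('X + b%:P) * ('X - c%:P)) = 3%N.
Proof.
rewrite size_monicM ?monicXaddC ?size_XaddC ?size_XsubC //.
by rewrite -size_poly_eq0 size_XsubC.
Qed.

Lemma prod_quad (I : finType) (P : pred I) (Q : I -> {poly F}) :
  (forall i, Q i \is monic) -> (forall i, size (Q i) = 3%N) ->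
  (\prod_(i | P i) Q i \is monic) /\ size (\prod_(i | P i) Q i) = (#|P|.*2).+1.
Proof.
move=> Qm Qs; split; first by apply: monic_prod => i _; apply: Qm.
rewrite size_prod; last by move=> i _; apply: monic_neq0.
rewrite (eq_bigr (fun _ => 3%N)); last by move=> i _; apply: Qs.
rewrite sum_nat_const -addnn; lia.
Qed.

Lemma mon_coef (q : {poly F}) s i :
  q \is monic -> size q = s.+1 -> (s <= i)%N -> q`_i = (i == s)%:R.
Proof.
move=> qm qs si; case: eqP => [->|ne].
  by have := monicP qm; rewrite /lead_coef qs.
by rewrite nth_default // qs; lia.
Qed.

End Quad.

Section K.
Variables (R : realType) (p : R) (a : R[i]) (n : nat) (X : 'I_n.+1 -> R[i]).
Local Notation C := R[i].
Local Notation w := (omega p).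
Local Notation e1 := (Cexp (cc a)).
Local Notation e2 := (Cexp (- cc a)).

Definition dp j (z : C) := z ^+ 2 - X j ^+ 2.
Definition np j (z : C) := (z + w * X j) * (z - w^-1 * X j).
Definition mp j (z : C) := (z + w^-1 * X j) * (z - w * X j).
Definition Dp j : {poly C} := ('X + (X j)%:P) * ('X - (X j)%:P).
Definition Np j : {poly C} := ('X + (w * X j)%:P) * ('X - (w^-1 * X j)%:P).
Definition Mp j : {poly C} := ('X + (w^-1 * X j)%:P) * ('X - (w * X j)%:P).
Definition Rk k := Rterm p (@Jexpl R p a n) X k.
Definition cT (T : {set 'I_n.+1}) := EE a (dS T) * AA p X T.

Definition PP : {poly C} :=
  \sum_(T : {set 'I_n.+1}) cT T *: (e1 *: (\prod_(j in ~: T) Np j * \prod_(i in T) Dp i)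
                    + e2 *: (\prod_(i in T) Mp i * \prod_(j in ~: T) Dp j))
  - ((e1 + e2) * Jexpl p a X) *: \prod_j Dp j
  - \sum_k (X k * Rk k) *: (('X - (X k)%:P) * \prod_(j | j != k) Dp j).

Lemma hDp j z : (Dp j).[z] = dp j z.
Proof. rewrite /Dp /dp !hornerE; ring. Qed.
Lemma hNp j z : (Np j).[z] = np j z.
Proof. by rewrite /Np /np !hornerE. Qed.
Lemma hMp j z : (Mp j).[z] = mp j z.
Proof. by rewrite /Mp /mp !hornerE. Qed.

Lemma hornerPP z : PP.[z] =
  \sum_(T : {set 'I_n.+1}) cT T * (e1 * (\prod_(j in ~: T) np j z * \prod_(i in T) dp i z)
                    + e2 * (\prod_(i in T) mp i z * \prod_(j in ~: T) dp j z))
  - ((e1 + e2) * Jexpl p a X) * \prod_j dp j z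
  - \sum_k (X k * Rk k) * ((z - X k) * \prod_(j | j != k) dp j z).
Proof.
rewrite /PP !hornerD !hornerN !horner_sum hornerZ horner_prod.
congr (_ - _ * _ - _).
- apply: eq_bigr => T _; rewrite hornerZ hornerD !hornerZ !hornerM !horner_prod.
  by congr (_ * (_ * (_ * _) + _ * (_ * _))); apply: eq_bigr => i _; rewrite ?hDp ?hNp ?hMp.
- by apply: eq_bigr => i _; rewrite hDp.
- apply: eq_bigr => k _; rewrite hornerZ hornerM horner_prod hornerXsubC.
  by congr (_ * (_ * _)); apply: eq_bigr => i _; rewrite hDp.
Qed.

Lemma Dp_monic j : Dp j \is monic. Proof. exact: quad_monic. Qed.
Lemma Dp_size j : size (Dp j) = 3%N. Proof. exact: quad_size. Qed.
Lemma Np_monic j : Np j \is monic. Proof. exact: quad_monic. Qed.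
Lemma Np_size j : size (Np j) = 3%N. Proof. exact: quad_size. Qed.
Lemma Mp_monic j : Mp j \is monic. Proof. exact: quad_monic. Qed.
Lemma Mp_size j : size (Mp j) = 3%N. Proof. exact: quad_size. Qed.

Lemma mon2 (Q1 Q2 : 'I_n.+1 -> {poly C}) (A B : {set 'I_n.+1}) :
  (forall i, Q1 i \is monic) -> (forall i, size (Q1 i) = 3%N) ->
  (forall i, Q2 i \is monic) -> (forall i, size (Q2 i) = 3%N) ->
  (#|A| + #|B| = n.+1)%N ->
  forall i, (n.+1.*2 <= i)%N ->
  (\prod_(j in A) Q1 j * \prod_(j in B) Q2 j)`_i = (i == n.+1.*2)%:R.
Proof.
move=> m1 s1 m2 s2 h i hi.
have [ma sa] := prod_quad (mem A) m1 s1.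
have [mb sb] := prod_quad (mem B) m2 s2.
apply: mon_coef => //; first by rewrite monicMl.
rewrite size_monicM ?monic_neq0 // sa sb.
have -> : #|mem A| = #|A| by [].
have -> : #|mem B| = #|B| by [].
lia.
Qed.

Lemma size_PP : (size PP <= n.+1.*2)%N.
Proof.
apply/leq_sizeP => i hi.
rewrite /PP !coefB !coef_sum coefZ.
have cC : forall T : {set 'I_n.+1}, (#|~: T| + #|T| = n.+1)%N.
  by move=> T; rewrite addnC cardsC card_ord.
have cC' : forall T : {set 'I_n.+1}, (#|T| + #|~: T| = n.+1)%N.
  by move=> T; rewrite cardsC card_ord.
have hT : forall T : {set 'I_n.+1}, (cT T *:
      (e1 *: (\prod_(j in ~: T) Np j * \prod_(i1 in T) Dp i1) +
       e2 *: (\prod_(i1 in T) Mp i1 * \prod_(j in ~: T) Dp j)))`_i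
     = cT T * (e1 * (i == n.+1.*2)%:R + e2 * (i == n.+1.*2)%:R).
  move=> T; rewrite coefZ coefD !coefZ.
  rewrite (mon2 Np_monic Np_size Dp_monic Dp_size (cC T)) //.
  by rewrite (mon2 Mp_monic Mp_size Dp_monic Dp_size (cC' T)).
rewrite (eq_bigr _ (fun T _ => hT T)).
have [ma sa] := prod_quad predT Dp_monic Dp_size.
rewrite (mon_coef ma sa); last by rewrite card_ord.
rewrite card_ord.
rewrite [\sum_(k < n.+1) _]big1; last first.
  move=> k _; rewrite coefZ prod_neq_lift.
  have [mb sb] := prod_quad predT (fun i => Dp_monic (lift k i)) (fun i => Dp_size (lift k i)).
  rewrite nth_default ?mulr0 //.
  rewrite size_monicM ?monicXsubC ?monic_neq0 // size_XsubC sb card_ord.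
  by move: hi; rewrite /=; lia.
rewrite -mulr_suml JexplE.
have -> : \sum_(S : {set 'I_n.+1}) EE a (dS S) * AA p X S = \sum_T cT T by [].
ring.
Qed.

Lemma conv_np j z : X j != 0 -> z ^+ 2 != X j ^+ 2 -> ff p (z / X j) * dp j z = np j z.
Proof.
move=> h1 h2; have hw := omega_neq0 p.
rewrite /ff /dp /np; field.
by rewrite hw h1 mulN1r subr_eq0 h2.
Qed.

Lemma conv_mp j z : z != 0 -> z ^+ 2 != X j ^+ 2 -> ff p (X j / z) * dp j z = mp j z.
Proof.
move=> h1 h2; have hw := omega_neq0 p.
rewrite /ff /dp /mp; field.
by rewrite hw h1 mulN1r subr_eq0 eq_sym h2.
Qed.

Definition GG z := \sum_(T : {set 'I_n.+1}) cT T * (e1 * (\prod_(j in ~: T) np j z * \prod_(i in T) dp i z)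
                    + e2 * (\prod_(i in T) mp i z * \prod_(j in ~: T) dp j z)).

Lemma G_root k z : dp k z = 0 -> GG z =
  \sum_(T : {set 'I_n}) EE a (dS T) * AA p (dropv X k) T *
   (np k z * \prod_(j in ~: T) np (lift k j) z *
        \prod_(i in T) (ff p (X (lift k i) / X k) * dp (lift k i) z)
    + mp k z * \prod_(i in T) mp (lift k i) z *
        \prod_(j in ~: T) (ff p (X k / X (lift k j)) * dp (lift k j) z)).
Proof.
move=> dk; rewrite /GG (sum_split k); apply: eq_bigr => T _.
rewrite (_ : EE a (dS T) = EE a (dS T) * (e1 * e2)); last by rewrite e12 mulr1.
rewrite /cT AA_lift AA_lift1 dS_lift dS_lift1 EE_S EE_P setC_lift setC_lift1.
rewrite !prod_lift !prod_lift1 !big_split /= dk.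
ring.
Qed.

Lemma dpN j z : dp j (- z) = dp j z. Proof. rewrite /dp; ring. Qed.
Lemma npN j z : np j (- z) = mp j z. Proof. rewrite /np /mp; ring. Qed.
Lemma mpN j z : mp j (- z) = np j z. Proof. rewrite /np /mp; ring. Qed.

Lemma hornerPP' z : PP.[z] = GG z
  - ((e1 + e2) * Jexpl p a X) * \prod_j dp j z
  - \sum_k (X k * Rk k) * ((z - X k) * \prod_(j | j != k) dp j z).
Proof. exact: hornerPP. Qed.

Lemma npk (k : 'I_n.+1) : np k (X k) = X k ^+ 2 * (w - w^-1).
Proof. have hw := omega_neq0 p; rewrite /np; field; by rewrite hw. Qed.
Lemma mpk (k : 'I_n.+1) : mp k (X k) = - (X k ^+ 2 * (w - w^-1)).
Proof. have hw := omega_neq0 p; rewrite /mp; field; by rewrite hw. Qed.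

Hypothesis X0 : forall i, X i != 0.
Hypothesis Xd : forall i j, i != j -> X i ^+ 2 != X j ^+ 2.

Lemma convT_mp (k : 'I_n.+1) (T : {set 'I_n}) :
  \prod_(i in T) (ff p (X (lift k i) / X k) * dp (lift k i) (X k)) =
  \prod_(i in T) mp (lift k i) (X k).
Proof. apply: eq_bigr => i _; apply: conv_mp => //; apply: Xd; exact: neq_lift. Qed.

Lemma convT_np (k : 'I_n.+1) (T : {set 'I_n}) :
  \prod_(i in T) (ff p (X k / X (lift k i)) * dp (lift k i) (X k)) =
  \prod_(i in T) np (lift k i) (X k).
Proof. apply: eq_bigr => i _; apply: conv_np => //; apply: Xd; exact: neq_lift. Qed.

Lemma dall_root (k : 'I_n.+1) z : dp k z = 0 -> \prod_j dp j z = 0.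
Proof. by move=> dk; rewrite (bigD1 k) //= dk mul0r. Qed.

Lemma rsum_root (k : 'I_n.+1) z : dp k z = 0 ->
  \sum_i (X i * Rk i) * ((z - X i) * \prod_(j | j != i) dp j z) =
  (X k * Rk k) * ((z - X k) * \prod_(j | j != k) dp j z).
Proof.
move=> dk; rewrite [LHS](bigD1 k) // [X in _ + X = _]big1 ?addr0 // => i /= ik.
rewrite (bigD1 k) /=; first by rewrite dk mul0r !mulr0.
by rewrite eq_sym.
Qed.

Lemma PP_plus (k : 'I_n.+1) : PP.[X k] = 0.
Proof.
have dk : dp k (X k) = 0 by rewrite /dp subrr.
rewrite hornerPP' (dall_root dk) (rsum_root dk) subrr !mul0r !mulr0 !subr0.
rewrite (G_root dk) big1 // => T _.
rewrite convT_mp convT_np npk mpk; ring.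
Qed.

Lemma PP_minus (k : 'I_n.+1) : PP.[- X k] = 0.
Proof.
have dk : dp k (- X k) = 0 by rewrite dpN /dp subrr.
rewrite hornerPP' (dall_root dk) (rsum_root dk) mulr0 subr0.
rewrite (G_root dk).
set Pm := \prod_(i < n) ff p (X (lift k i) / X k).
set Pp := \prod_(i < n) ff p (X k / X (lift k i)).
set Dh := \prod_(i < n) dp (lift k i) (X k).
have hM : forall T : {set 'I_n}, Pm * Dh =
    \prod_(i in T) mp (lift k i) (X k) * \prod_(i in ~: T) mp (lift k i) (X k).
  by move=> T; rewrite /Pm /Dh -big_split /= (prod_setC T) !convT_mp.
have hN : forall T : {set 'I_n}, Pp * Dh =
    \prod_(i in T) np (lift k i) (X k) * \prod_(i in ~: T) np (lift k i) (X k).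
  by move=> T; rewrite /Pp /Dh -big_split /= (prod_setC T) !convT_np.
have hT : forall T : {set 'I_n},
  np k (- X k) * \prod_(j in ~: T) np (lift k j) (- X k) *
      \prod_(i in T) (ff p (X (lift k i) / X k) * dp (lift k i) (- X k)) +
  mp k (- X k) * \prod_(i in T) mp (lift k i) (- X k) *
      \prod_(j in ~: T) (ff p (X k / X (lift k j)) * dp (lift k j) (- X k))
  = mp k (X k) * (Pm * Dh) + np k (X k) * (Pp * Dh).
  move=> T; rewrite npN mpN (hM T) (hN T).
  rewrite (eq_bigr (fun j => mp (lift k j) (X k))); last by move=> j _; rewrite npN.
  rewrite [X in _ + _ * X * _](eq_bigr (fun j => np (lift k j) (X k))); last by move=> j _; rewrite mpN.
  rewrite [X in _ * _ * X + _ = _](eq_bigr (fun i => ff p (X (lift k i) / X k) * dp (lift k i) (X k))); last by move=> j _; rewrite dpN.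
  rewrite [X in _ + _ * _ * X = _](eq_bigr (fun i => ff p (X k / X (lift k i)) * dp (lift k i) (X k))); last by move=> j _; rewrite dpN.
  rewrite convT_mp convT_np; ring.
rewrite (eq_bigr _ (fun T _ => congr1 (fun u => EE a (dS T) * AA p (dropv X k) T * u) (hT T))).
rewrite -mulr_suml -JexplE.
rewrite /Rk /Rterm !prod_neq_lift.
rewrite [\prod_(i < n) dp (lift k i) (- X k)](eq_bigr (fun i => dp (lift k i) (X k))); last by move=> j _; rewrite dpN.
rewrite -/Pm -/Pp -/Dh npk mpk omega_diff; ring.
Qed.

Lemma X_inj : injective X.
Proof. move=> i j e; apply/eqP; apply: contraT => ne; have := Xd ne; by rewrite e eqxx. Qed.

Lemma PP0 : PP = 0.
Proof.
apply/eqP; apply: contraT => hP.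
pose rs := map X (enum 'I_n.+1) ++ map (fun i => - X i) (enum 'I_n.+1).
have hr : all (root PP) rs.
  rewrite all_cat; apply/andP; split; apply/allP => z /mapP [i _ ->].
    by rewrite /root PP_plus.
  by rewrite /root PP_minus.
have hu : uniq rs.
  have Xn : injective (fun i => - X i).
    by move=> i j e; apply: X_inj; apply: oppr_inj.
  rewrite cat_uniq (map_inj_uniq X_inj) (map_inj_uniq Xn) enum_uniq /= andbT.
  apply/hasPn => z /mapP [i _ ->]; apply/mapP => -[j _ e].
  have [ij|ij] := eqVneq i j.
    move: e; rewrite ij => e.
    have : X j * 2%:R = 0 by rewrite mulr_natr mulr2n -{1}e addNr.
    by move/eqP; rewrite mulf_eq0 pnatr_eq0 orbF (negbTE (X0 j)).
  by have := Xd ij; rewrite -e sqrrN eqxx.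
have := max_poly_roots hP hr hu.
rewrite /rs size_cat !size_map -enumT size_enum_ord.
have := size_PP; rewrite -!addnn => h1 h2.
by have := leq_trans h2 h1; rewrite ltnn.
Qed.

Lemma main_id z : z != 0 -> (forall i, z ^+ 2 != X i ^+ 2) ->
  \sum_(T : {set 'I_n.+1}) (EE a (dS T - 1) * \prod_(i in T) ff p (X i / z)
       + EE a (dS T + 1) * \prod_(j in ~: T) ff p (z / X j)) * AA p X T
  = (e1 + e2) * Jexpl p a X + \sum_i X i * Rk i / (z + X i).
Proof.
move=> z0 zd.
have dpn : forall j, dp j z != 0 by move=> j; rewrite /dp subr_eq0.
set Dz := \prod_j dp j z.
have Dzn : Dz != 0 by apply/prodf_neq0 => j _.
have h := congr1 (fun q => q.[z]) PP0; rewrite /= hornerPP' horner0 in h.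
set L := \sum_(T : {set 'I_n.+1}) _.
have hG : GG z = L * Dz.
  rewrite /GG /L mulr_suml; apply: eq_bigr => T _.
  have c1 : \prod_(j in ~: T) np j z =
      (\prod_(j in ~: T) ff p (z / X j)) * \prod_(j in ~: T) dp j z.
    by rewrite -big_split; apply: eq_bigr => j _; apply/esym; apply: conv_np.
  have c2 : \prod_(j in T) mp j z =
      (\prod_(j in T) ff p (X j / z)) * \prod_(j in T) dp j z.
    by rewrite -big_split; apply: eq_bigr => j _; apply/esym; apply: conv_mp.
  rewrite c1 c2 /Dz (prod_setC T) /cT EE_S EE_P; ring.
have hS : \sum_k X k * Rk k * ((z - X k) * \prod_(j | j != k) dp j z) =
    (\sum_i X i * Rk i / (z + X i)) * Dz.
  rewrite mulr_suml; apply: eq_bigr => i _.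
  have zi : z + X i != 0.
    apply: contra (zd i) => /eqP e; apply/eqP.
    by rewrite (_ : z = - X i) ?sqrrN // -(subr0 z) -e; ring.
  rewrite /Dz [in RHS](bigD1 i) //= /dp; field; by rewrite zi.
rewrite hG hS in h.
have : (L - ((e1 + e2) * Jexpl p a X + \sum_i X i * Rk i / (z + X i))) * Dz = 0.
  by rewrite -/Dz in h; apply: etrans h; ring.
by move/eqP; rewrite mulf_eq0 (negbTE Dzn) orbF subr_eq0 => /eqP.
Qed.

End K.


Section F.
Variables (R : realType) (p : R) (a : R[i]).
Local Notation C := R[i].

Lemma snocv_lift n (X : 'I_n -> C) z i : snocv X z (lift ord_max i) = X i.
Proof. by rewrite /snocv liftK. Qed.
Lemma snocv_max n (X : 'I_n -> C) z : snocv X z ord_max = z.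
Proof. by rewrite /snocv unlift_none. Qed.
Lemma dropv_snoc n (X : 'I_n -> C) z : dropv (snocv X z) ord_max = X.
Proof. by apply: funext => i; rewrite /dropv snocv_lift. Qed.

Lemma generic_snoc n (X : 'I_n -> C) z : generic (snocv X z) ->
  [/\ generic X, z != 0 & forall i, z ^+ 2 != X i ^+ 2].
Proof.
move=> [h1 h2]; split.
- split=> [i|i j ij]; first by have := h1 (lift ord_max i); rewrite snocv_lift.
  have := h2 (lift ord_max i) (lift ord_max j); rewrite !snocv_lift; apply.
  by rewrite (inj_eq (@lift_inj _ ord_max)).
- by have := h1 ord_max; rewrite snocv_max.
- move=> i; have := h2 ord_max (lift ord_max i); rewrite snocv_max snocv_lift; apply.
  exact: neq_lift.
Qed.

Lemma generic_drop n (X : 'I_n.+1 -> C) k : generic X -> generic (dropv X k).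
Proof.
move=> [h1 h2]; split=> [i|i j ij]; first exact: h1.
apply: h2; by rewrite (inj_eq (@lift_inj _ k)).
Qed.

Lemma two_cos : 2%:R * Ccos (pi%:C * a) = Cexp (cc a) + Cexp (- cc a).
Proof.
rewrite /Ccos mulrC divfK ?pnatr_eq0 // /cc !mulrA.
all: try reflexivity.
Qed.

Lemma Jexpl_split2 n (x : 'I_n.+1 -> C) (k : 'I_n.+1) :
  Jexpl p a x = \sum_T (EE a (dS T - 1) * \prod_(i in T) ff p (dropv x k i / x k)
     + EE a (dS T + 1) * \prod_(j in ~: T) ff p (x k / dropv x k j)) * AA p (dropv x k) T.
Proof. exact: Jexpl_split. Qed.

Lemma Jexpl_rec n (X : 'I_n.+1 -> C) (x : C) : generic (snocv X x) ->
  Jexpl p a (snocv X x) =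
    2%:R * Ccos (pi%:C * a) * Jexpl p a X
    + \sum_(i < n.+1) X i * Rterm p (@Jexpl R p a n) X i / (x + X i).
Proof.
move=> /generic_snoc [[X0 Xd] x0 xd].
rewrite (Jexpl_split2 _ ord_max) dropv_snoc snocv_max two_cos.
exact: main_id.
Qed.

Lemma prod_I0 (P : pred 'I_0) (F : 'I_0 -> C) : \prod_(i | P i) F i = 1.
Proof. by rewrite big1 // => -[]. Qed.

Lemma sum_set_I0 (F : {set 'I_0} -> C) : \sum_S F S = F finset.set0.
Proof. by apply: big_pred1 => S /=; apply/esym/eqP/setP => -[]. Qed.

Lemma dS0 : dS (finset.set0 : {set 'I_0}) = 0.
Proof. by rewrite /dS cards0 finset.setC0 cardsT card_ord. Qed.

Lemma EE0 : EE a 0 = 1.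
Proof. by rewrite /EE mulr0 Cexp0. Qed.

Lemma Jexpl0 (x : 'I_0 -> C) : Jexpl p a x = 1.
Proof. by rewrite JexplE sum_set_I0 dS0 EE0 /AA prod_I0 mulr1. Qed.

Lemma Jexpl1 (x : 'I_1 -> C) : Jexpl p a x = 2%:R * Ccos (pi%:C * a).
Proof.
rewrite (Jexpl_split p a _ ord0) sum_set_I0 dS0 /AA !prod_I0 two_cos.
rewrite -[0 - 1]/(0 - 1) EE_P EE_S EE0; ring.
Qed.

Lemma Jexpl_sym N (s : 'S_N) (x : 'I_N -> C) :
  Jexpl p a (fun k => x (s k)) = Jexpl p a x.
Proof.
rewrite !JexplE [RHS](reindex_inj (imset_inj (@perm_inj _ s))) /=.
apply: eq_bigr => S _; congr (_ * _).
  have c1 : #|s @: S| = #|S| by rewrite card_imset //; apply: perm_inj.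
  have c2 : #|~: (s @: S)| = #|~: S|.
    have := cardsC (s @: S); have := cardsC S; rewrite c1; lia.
  by rewrite /dS c1 c2.
rewrite /AA big_imset /=; last by move=> i j _ _; apply: perm_inj.
apply: eq_bigr => i _.
rewrite [RHS](reindex_inj (@perm_inj _ s)); apply: eq_bigl => j.
by rewrite !inE mem_imset //; apply: perm_inj.
Qed.

Lemma Jexpl_hom N (lam : C) (x : 'I_N -> C) : lam != 0 ->
  Jexpl p a (fun k => lam * x k) = Jexpl p a x.
Proof.
move=> l0; rewrite !JexplE; apply: eq_bigr => S _; congr (_ * _).
apply: eq_bigr => i _; apply: eq_bigr => j _.
by rewrite invfM mulrACA mulfV // mul1r.
Qed.

Lemma Jexpl_satisfies : satisfies_rec p a (@Jexpl R p a).
Proof.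
split; first exact: Jexpl0.
split; first exact: Jexpl1.
move=> n X x g; exact: Jexpl_rec.
Qed.

Lemma Jexpl_unique (J : forall N, ('I_N -> C) -> C) :
  satisfies_rec p a J ->
  forall (N : nat) (x : 'I_N -> C), generic x -> J N x = Jexpl p a x.
Proof.
move=> [J0 [J1 Jr]].
suff H : forall N, (forall x : 'I_N -> C, generic x -> J N x = Jexpl p a x) /\
                   (forall x : 'I_N.+1 -> C, generic x -> J N.+1 x = Jexpl p a x).
  by move=> N x gx; case: (H N) => H1 _; apply: H1.
elim=> [|N [IH1 IH2]].
  split=> x _; first by rewrite J0 Jexpl0.
  by rewrite J1 Jexpl1.
split; first exact: IH2.
move=> x gx.
have e : x = snocv (fun i : 'I_N.+1 => x (lift ord_max i)) (x ord_max).
  apply: funext => i; rewrite /snocv; by case: unliftP => [j ->|->].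
move: gx; rewrite e; move: (fun i : 'I_N.+1 => x (lift ord_max i)) (x ord_max) => X z gx.
rewrite Jr // Jexpl_rec //.
have [gX _ _] := generic_snoc gx.
rewrite IH2 //; congr (_ + _); apply: eq_bigr => i _.
rewrite /Rterm IH1 //; exact: generic_drop.
Qed.

End F.


Unset Implicit Arguments.
Set Strict Implicit.
Set Printing Implicit Defensive.

Theorem theorem4 (R : realType) (p : R) (a : R[i]) :
  (-1 < p < 0 \/ 0 < p < 1) ->
  (* the explicit functions satisfy the initial conditions and recurrence *)
  satisfies_rec p a (@Jexpl R p a) /\
  (* they are symmetric *)
  (forall (N : nat) (s : 'S_N) (x : 'I_N -> R[i]),
      Jexpl p a (fun k => x (s k)) = Jexpl p a x) /\
  (* they are homogeneous of total degree 0 *)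
  (forall (N : nat) (lam : R[i]) (x : 'I_N -> R[i]), lam != 0 ->
      Jexpl p a (fun k => lam * x k) = Jexpl p a x) /\
  (* uniqueness: any family satisfying the recurrence coincides with them *)
  (forall J : forall N, ('I_N -> R[i]) -> R[i],
      satisfies_rec p a J ->
      forall (N : nat) (x : 'I_N -> R[i]), generic x -> J N x = Jexpl p a x).
Proof.
move=> _; split; first exact: Jexpl_satisfies.
split; first by move=> N s x; apply: Jexpl_sym.
split; first by move=> N lam x; apply: Jexpl_hom.
move=> J hJ N x gx; exact: Jexpl_unique.
Qed.
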